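(* Let $\mathcal{R}=(G_0,e\to R)$ be an expanding replacement system. Then its limit space $X=\Omega/\sim$ is a compact metrizable space.
   Context: A graph means a finite directed multigraph (loops, multiple edges allowed). A replacement system $\mathcal{R}=(G_0,e\to R)$: $G_0$ a graph, $e$ a non-loop directed edge from $v$ to $w$, $R$ a graph containing $v,w$ (initial and terminal vertices of $R$). Replacing an edge $\varepsilon$ of a graph means deleting it and gluing in a copy of $R$ with its initial/terminal vertices identified with the initial/terminal vertices of $\varepsilon$; new edges are named $\varepsilon\zeta$ ($\zeta\in E(R)$). The full expansion $G_n$ is obtained from $G_{n-1}$ by replacing every edge; edges of $G_n$ are words $\varepsilon_0\cdots\varepsilon_n$ with $\varepsilon_0\in E(G_0)$, $\varepsilon_i\in E(R)$. $\mathcal{R}$ is expanding if neither $G_0$ nor $R$ has isolated vertices, the initial and terminal vertices of $R$ are not joined by an edge, and $R$ has at least three vertices and two edges. The symbol space $\Omega=E(G_0)\times E(R)^{\mathbb{N}}$ has the product topology; $\varepsilon_0\varepsilon_1\cdots\sim\varepsilon_0'\varepsilon_1'\cdots$ iff for every $n$ the edges $\varepsilon_0\cdots\varepsilon_n$ and $\varepsilon_0'\cdots\varepsilon_n'$ of $G_n$ share at least one vertex (for expanding systems this is an equivalence relation), and $X=\Omega/\sim$ carries the quotient topology. *)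

(* Defs.v *)
From HB Require Import structures.
From mathcomp Require Import all_boot all_order all_algebra.
From mathcomp Require Import all_classical all_reals topology.
From mathcomp Require Import Rstruct.

Set Implicit Arguments.
Unset Strict Implicit.
Unset Printing Implicit Defensive.

Local Open Scope classical_set_scope.

Record graph := Graph {
  gV : finType;
  gE : finType;
  gsrc : gE -> gV;
  gtgt : gE -> gV }.

(** A replacement system (G0, e -> R): the base graph G0, the replacement
    graph R, and the initial / terminal vertices of R (the endpoints v, w of
    the non-loop edge e, hence distinct). *)
Record repl_system := ReplSystem {
  rs_G0 : graph;
  rs_R : graph;
  rs_init : gV rs_R;
  rs_term : gV rs_R;
  rs_init_term : rs_init <> rs_term }.

Definition no_isolated (G : graph) : Prop :=
  forall v : gV G, exists z : gE G, gsrc z = v \/ gtgt z = v.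

Definition expanding (RS : repl_system) : Prop :=
  [/\ no_isolated (rs_G0 RS),
      no_isolated (rs_R RS),
      (forall z : gE (rs_R RS),
          ~ (gsrc z = rs_init RS /\ gtgt z = rs_term RS) /\
          ~ (gsrc z = rs_term RS /\ gtgt z = rs_init RS)),
      (3 <= #|gV (rs_R RS)|)%N &
      (2 <= #|gE (rs_R RS)|)%N ].

(** Vertices of the full expansions G_n.  A vertex is either a vertex of G0,
    or a vertex [VNew e0 w u] created when the edge e0 w (an edge of G_k,
    k = size w) is replaced by a copy of R, u being a vertex of R distinct
    from its initial and terminal vertices (which are glued to the endpoints
    of the replaced edge). *)
Inductive vertex (RS : repl_system) : Type :=
  | VBase of gV (rs_G0 RS)
  | VNew of gE (rs_G0 RS) & seq (gE (rs_R RS)) & gV (rs_R RS).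

(** [ends_aux e0 p st rest]: given the endpoints [st] of the edge e0 p of
    G_(size p), returns the endpoints of the edge e0 (p ++ rest). *)
Fixpoint ends_aux (RS : repl_system) (e0 : gE (rs_G0 RS))
    (p : seq (gE (rs_R RS))) (st : vertex RS * vertex RS)
    (rest : seq (gE (rs_R RS))) : vertex RS * vertex RS :=
  match rest with
  | [::] => st
  | z :: rest' =>
      let f (u : gV (rs_R RS)) :=
        if u == rs_init RS then st.1
        else if u == rs_term RS then st.2
        else VNew e0 p u in
      ends_aux e0 (rcons p z) (f (gsrc z), f (gtgt z)) rest'
  end.

(** (initial vertex, terminal vertex) of the edge e0 e1 ... en of G_n,
    where w = [e1; ...; en]. *)
Definition edge_ends (RS : repl_system) (e0 : gE (rs_G0 RS))
    (w : seq (gE (rs_R RS))) : vertex RS * vertex RS :=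
  ends_aux e0 [::] (VBase (gsrc e0), VBase (gtgt e0)) w.

Definition share_vertex (RS : repl_system) (a b : vertex RS * vertex RS) : Prop :=
  a.1 = b.1 \/ a.1 = b.2 \/ a.2 = b.1 \/ a.2 = b.2.

Definition symbol_space (RS : repl_system) : topologicalType :=
  (discrete_topology (gE (rs_G0 RS)) *
   {ptws nat -> discrete_topology (gE (rs_R RS))})%type.

(** the prefix e0 e1 ... en of a symbol, as an edge of G_n *)
Definition prefix_word (RS : repl_system) (om : symbol_space RS) (n : nat)
  : seq (gE (rs_R RS)) := [seq om.2 i | i <- iota 0 n].

Definition symb_equiv (RS : repl_system) (om om' : symbol_space RS) : Prop :=
  forall n : nat,
    share_vertex (edge_ends om.1 (prefix_word om n))
                 (edge_ends om'.1 (prefix_word om' n)).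

Definition is_quotient_space (RS : repl_system) (Y : topologicalType)
    (q : symbol_space RS -> Y) : Prop :=
  [/\ (forall y : Y, exists om, q om = y),
      (forall om om', q om = q om' <-> symb_equiv om om') &
      (forall U : set Y, open U <-> open (q @^-1` U)) ].

Local Open Scope ring_scope.

Definition metrizable (Y : topologicalType) : Prop :=
  exists d : Y -> Y -> Rdefinitions.R,
    [/\ (forall x y, d x y = 0 <-> x = y),
        (forall x y, d x y = d y x),
        (forall x y z, d x z <= d x y + d y z) &
        (forall U : set Y, open U <->
           (forall x, U x -> exists2 e : Rdefinitions.R, 0 < e & [set y | d x y < e] `<=` U)) ].

(* Main.v *)
From HB Require Import structures.
Require Import Defs.
From mathcomp Require Import all_boot all_order all_algebra.
From mathcomp Require Import all_classical all_reals topology.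

Set Implicit Arguments.
Unset Strict Implicit.
Unset Printing Implicit Defensive.

Lemma inf_pigeon (X : finType) (P : nat -> Prop) (f : nat -> X) :
  (forall M, exists m, (M <= m)%N /\ P m) ->
  exists x, forall M, exists m, [/\ (M <= m)%N, P m & f m = x].
Proof.
move=> hP; apply: contrapT => H.
have H1 : forall x, exists M, forall m, (M <= m)%N -> P m -> f m <> x.
  move=> x; apply: contrapT => H2; apply: H; exists x => M.
  apply: contrapT => H3; apply: H2; exists M => m Mm Pm fmx; apply: H3.
  by exists m.
have [Mx HMx] := choice H1.
have [m [Mm Pm]] := hP (\max_(x : X) Mx x).
apply: (HMx (f m) m _ Pm erefl).
apply: leq_trans Mm; exact: (@bigop.leq_bigmax X Mx (f m)).
Qed.

Lemma koenig_abs (A B : finType) (P : A -> (nat -> B) -> nat -> Prop) :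
  (exists a g, P a g 0) ->
  (forall a g n, P a g n -> exists b, P a (fun i => if (i < n)%N then g i else b) n.+1) ->
  (forall a g g' n, (forall i, (i < n)%N -> g i = g' i) -> P a g n -> P a g' n) ->
  exists a l, forall n, P a l n.
Proof.
move=> [a [g0 Pa0]] hstep hext.
have H1 : forall gn : (nat -> B) * nat, exists b,
    P a gn.1 gn.2 -> P a (fun i => if (i < gn.2)%N then gn.1 i else b) gn.2.+1.
  move=> [g n] /=; have [Pg|nPg] := pselect (P a g n).
    by have [b Hb] := hstep _ _ _ Pg; exists b.
  by exists (g0 0%N).
have [st Hst] := choice H1.
pose G := fix G n := if n is n'.+1 then
  (fun i => if (i < n')%N then G n' i else st (G n', n')) else g0.
have PG : forall n, P a (G n) n.
  elim=> [|n IH] //=; exact: (Hst (G n, n) IH).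
pose l i := G i.+1 i.
have Gl : forall n i, (i < n)%N -> G n i = l i.
  elim=> [|n IH] i //= lin.
  case: ltnP => [iln|nli]; first exact: IH.
  have -> : i = n by apply/eqP; rewrite eqn_leq nli -ltnS lin.
  by rewrite /l /= ltnn.
exists a, l => n; exact: hext _ _ _ _ (Gl n) (PG n).
Qed.

Lemma koenig_seq (A B : finType) (u : nat -> A * (nat -> B)) :
  exists a l, forall k M, exists m,
    [/\ (M <= m)%N, (u m).1 = a & forall i, (i < k)%N -> (u m).2 i = l i].
Proof.
pose P a g n := forall M, exists m,
    [/\ (M <= m)%N, (u m).1 = a & forall i, (i < n)%N -> (u m).2 i = g i].
have := @koenig_abs A B P; apply.
- have [a Ha] := @inf_pigeon A (fun _ => True) (fun m => (u m).1)
    (fun M => ex_intro _ M (conj (leqnn M) I)).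
  exists a, (u 0%N).2 => M; have [m [Mm _ um]] := Ha M; by exists m.
- move=> a g n Pg.
  have [b Hb] := @inf_pigeon B (fun m => (u m).1 = a /\
       forall i, (i < n)%N -> (u m).2 i = g i) (fun m => (u m).2 n)
    (fun M => let: ex_intro m (And3 h1 h2 h3) := Pg M in
              ex_intro _ m (conj h1 (conj h2 h3))).
  exists b => M; have [m [Mm [um1 um2] umn]] := Hb M.
  exists m; split => // i; rewrite ltnS leq_eqVlt => /orP[/eqP->|iln].
    by rewrite ltnn.
  by rewrite iln um2.
- move=> a g g' n gg' Pg M; have [m [Mm um1 um2]] := Pg M.
  by exists m; split => // i ilt; rewrite um2 // gg'.
Qed.
Local Open Scope classical_set_scope.
Section Om.
Context (A B : finType).
Local Notation Om := (discrete_topology A * {ptws nat -> discrete_topology B})%type.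

Definition agreeF (k : nat) (f g : nat -> B) := forall i, (i < k)%N -> f i = g i.

Lemma nbhs_agreeF (f : {ptws nat -> discrete_topology B}) k :
  nbhs f [set g : {ptws nat -> discrete_topology B} | agreeF k f g].
Proof.
elim: k => [|k IH].
  by apply: filterS (@filterT _ _ _) => g _ i.
have Hk : nbhs f [set g : {ptws nat -> discrete_topology B} | g k = f k].
  have := @proj_continuous nat (fun _ => discrete_topology B) k f.
  move=> /(_ [set f k]) H; apply: H; exact: discrete_set1.
apply: filterS (filterI IH Hk) => g [H1 H2] i.
rewrite ltnS leq_eqVlt => /orP[/eqP->//|ik]; exact: H1.
Qed.

Lemma nbhs_agreeF_inv (f : {ptws nat -> discrete_topology B}) (C : set {ptws nat -> discrete_topology B}) :
  nbhs f C -> exists k, forall g, agreeF k f g -> C g.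
Proof.
move=> Cf; apply: contrapT => H.
have H1 : forall k, exists g : {ptws nat -> discrete_topology B}, agreeF k f g /\ ~ C g.
  move=> k; apply: contrapT => H2; apply: H; exists k => g fg.
  apply: contrapT => Cg; apply: H2; by exists g.
have [gs Hg] := choice H1.
have cv : gs @ \oo --> f.
  apply/pointwise_cvgP => t.
  apply/discrete_cvg; exists t.+1 => // k /= tk.
  by rewrite (proj1 (Hg k)) // (leq_trans _ tk).
have [k [_ ]] : exists k, (0 <= k)%N /\ C (gs k).
  have [N _ HN] : \oo (gs @^-1` C) := cv C Cf.
  by exists N; split => //; apply: HN => /=.
by move/(proj2 (Hg k)).
Qed.
Definition agree (k : nat) (a b : Om) := a.1 = b.1 /\ agreeF k a.2 b.2.

Lemma nbhs_agree (a : Om) k : nbhs a [set b | agree k a b].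
Proof.
exists ([set a.1], [set g : {ptws nat -> discrete_topology B} | agreeF k a.2 g]).
  split; [exact: discrete_set1 | exact: nbhs_agreeF].
by move=> [b1 b2] [/= H1 H]; split.
Qed.

Lemma nbhs_agree_inv (a : Om) (C : set Om) :
  nbhs a C -> exists k, forall b, agree k a b -> C b.
Proof.
move=> [[C1 C2] [/= C1a C2a] sC].
have [k Hk] := nbhs_agreeF_inv C2a.
exists k => -[b1 b2] [/= <- H]; apply: sC; split => //=.
  exact: nbhs_singleton.
exact: Hk.
Qed.
End Om.

Lemma filter_fin_all (I : finType) T (F : set_system T) (Ff : Filter F)
  (C : I -> set T) : (forall i, F (C i)) -> F [set t | forall i, C i t].
Proof.
move=> FC.
have H : forall s : seq I, F [set t | forall i, i \in s -> C i t].
  elim=> [|i s IH]; first by apply: filterS (@filterT _ _ _) => t _ i.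
  apply: filterS (filterI (FC i) IH) => t [Ci Cs] j.
  by rewrite in_cons => /orP[/eqP->//|js]; exact: Cs.
by apply: filterS (H (enum I)) => t Ht i; apply: Ht; rewrite mem_enum.
Qed.

Section Main.
Context (RS : repl_system) (Y : topologicalType) (q : symbol_space RS -> Y)
  (hq : is_quotient_space q).
Local Notation K0 := (gE (rs_G0 RS)).
Local Notation K := (gE (rs_R RS)).
Local Notation Om := (symbol_space RS).
Local Notation agr := (@agree K0 K).

Definition Sh n (a b : Om) := share_vertex (edge_ends a.1 (prefix_word a n))
  (edge_ends b.1 (prefix_word b n)).

Lemma agree_prefix k (a b : Om) : agr k a b -> prefix_word a k = prefix_word b k.
Proof.
move=> [_ H]; rewrite /prefix_word; apply/eq_in_map => i.
by rewrite mem_iota add0n => /andP[_ ik]; exact: H.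
Qed.

Lemma Sh_agree k (a a' b b' : Om) : agr k a a' -> agr k b b' -> Sh k a b -> Sh k a' b'.
Proof.
move=> ha hb; rewrite /Sh -(agree_prefix ha) -(agree_prefix hb).
by case: ha => -> _; case: hb => -> _.
Qed.

Lemma agree_le k n (a b : Om) : (k <= n)%N -> agr n a b -> agr k a b.
Proof. by move=> kn [h1 h2]; split => // i ik; apply: h2; exact: leq_trans ik kn. Qed.

Lemma agree_refl k (a : Om) : agr k a a.
Proof. by []. Qed.

Lemma agree_sym k (a b : Om) : agr k a b -> agr k b a.
Proof. by move=> [h1 h2]; split => // i ik; rewrite h2. Qed.

Lemma Sh_refl n (a : Om) : Sh n a a.
Proof. by left. Qed.

Lemma Sh_sym n (a b : Om) : Sh n a b -> Sh n b a.
Proof. by rewrite /Sh /share_vertex; move=> [|[|[|]]] ->; tauto. Qed.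

Lemma qE (a b : Om) : q a = q b <-> forall n, Sh n a b.
Proof. by case: hq => _ h _; exact: h. Qed.

Lemma q_surj (y : Y) : exists a, q a = y.
Proof. by case: hq => h _ _; exact: h. Qed.

Lemma q_open (U : set Y) : open U <-> open (q @^-1` U).
Proof. by case: hq => _ _ h; exact: h. Qed.

Definition Sle n (a b : Om) := forall k, (k <= n)%N -> Sh k a b.
Definition E n (x y : Y) := exists a b, [/\ q a = x, q b = y & Sle n a b].

Lemma koenig4 (u1 u2 u3 u4 : nat -> Om) : exists a1 a2 a3 a4 : Om,
  forall k M, exists m, [/\ (M <= m)%N, agr k (u1 m) a1, agr k (u2 m) a2,
    agr k (u3 m) a3 & agr k (u4 m) a4].
Proof.
have [[[[b1 b2] b3] b4] [l Hl]] := @koenig_seq (K0*K0*K0*K0)%type (K*K*K*K)%type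
  (fun m => (((u1 m).1, (u2 m).1, (u3 m).1, (u4 m).1),
             fun i => ((u1 m).2 i, (u2 m).2 i, (u3 m).2 i, (u4 m).2 i))).
exists ((b1, fun i => (l i).1.1.1) : Om), ((b2, fun i => (l i).1.1.2) : Om),
  ((b3, fun i => (l i).1.2) : Om), ((b4, fun i => (l i).2) : Om).
move=> k M; have [m [Mm /= h1 h2]] := Hl k M; exists m.
case: h1 => e1 e2 e3 e4.
split => //; split => //= i ik; by rewrite -(h2 i ik).
Qed.

Lemma lim_S (ua ub : nat -> Om) a b : (forall m, Sle m (ua m) (ub m)) ->
  (forall k M, exists m, [/\ (M <= m)%N, agr k (ua m) a & agr k (ub m) b]) ->
  forall k, Sh k a b.
Proof.
move=> hS hl k; have [m [km ha hb]] := hl k k; exact: Sh_agree ha hb (hS m k km).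
Qed.

Lemma lim_class (ua : nat -> Om) a x : (forall m, q (ua m) = x) ->
  (forall k, exists m, agr k (ua m) a) -> q a = x.
Proof.
move=> hq' hl; rewrite -(hq' 0%N); apply: (proj2 (qE _ _)) => k.
have [m hm] := hl k.
have : Sh k (ua m) (ua 0%N) by apply: (proj1 (qE _ _)); rewrite !hq'.
exact: Sh_agree hm (agree_refl _ _).
Qed.

Lemma E_refl n x : E n x x.
Proof. by have [a ha] := q_surj x; exists a, a; split => // k _; exact: Sh_refl. Qed.

Lemma E_sym n x y : E n x y -> E n y x.
Proof. by move=> [a [b [ha hb hS]]]; exists b, a; split => // k kn; apply: Sh_sym; apply: hS. Qed.

Lemma E_mono n m x y : (n <= m)%N -> E m x y -> E n x y.
Proof.
by move=> nm [a [b [ha hb hS]]]; exists a, b; split => // k kn; apply: hS; exact: leq_trans kn nm.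
Qed.

Lemma E_sep x y : (forall n, E n x y) -> x = y.
Proof.
move=> H.
have H' : forall n, exists ab : Om * Om, [/\ q ab.1 = x, q ab.2 = y & Sle n ab.1 ab.2].
  by move=> n; have [a [b hab]] := H n; exists (a, b).
have [f Hf] := choice H'.
have [a [b [a3 [a4 Hl]]]] := koenig4 (fun m => (f m).1) (fun m => (f m).2)
  (fun m => (f m).1) (fun m => (f m).1).
have qa : q a = x.
  apply: (@lim_class (fun m => (f m).1)) => [m|k]; first by case: (Hf m).
  by have [m [_ h _ _ _]] := Hl k 0%N; exists m.
have qb : q b = y.
  apply: (@lim_class (fun m => (f m).2)) => [m|k]; first by case: (Hf m).
  by have [m [_ _ h _ _]] := Hl k 0%N; exists m.
rewrite -qa -qb; apply: (proj2 (qE _ _)).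
apply: (@lim_S (fun m => (f m).1) (fun m => (f m).2)) => [m|k M].
  by case: (Hf m).
by have [m [? ? ? _ _]] := Hl k M; exists m.
Qed.

Lemma E_split n : exists m, forall x y z, E m x y -> E m y z -> E n x z.
Proof.
apply: contrapT => H.
have H1 : forall m, exists t : Om * Om * Om * Om,
    [/\ Sle m t.1.1.1 t.1.1.2, Sle m t.1.2 t.2, q t.1.1.2 = q t.1.2
      & ~ Sle n t.1.1.1 t.2].
  move=> m; apply: contrapT => H2; apply: H; exists m.
  move=> x y z [a [b [qa qb Sab]]] [b' [c [qb' qc Sbc]]].
  exists a, c; split => //; apply: contrapT => nS; apply: H2.
  by exists (a, b, b', c); split => //=; rewrite qb qb'.
have [f Hf] := choice H1.
have [a [b [b' [c Hl]]]] := koenig4 (fun m => (f m).1.1.1) (fun m => (f m).1.1.2)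
  (fun m => (f m).1.2) (fun m => (f m).2).
have Sab : forall k, Sh k a b.
  apply: (@lim_S (fun m => (f m).1.1.1) (fun m => (f m).1.1.2)) => [m|k M].
    by case: (Hf m).
  by have [m [? ? ? _ _]] := Hl k M; exists m.
have Sbc : forall k, Sh k b' c.
  apply: (@lim_S (fun m => (f m).1.2) (fun m => (f m).2)) => [m|k M].
    by case: (Hf m).
  by have [m [? _ _ ? ?]] := Hl k M; exists m.
have Sbb : forall k, Sh k b b'.
  apply: (@lim_S (fun m => (f m).1.1.2) (fun m => (f m).1.2)) => [m|k M].
    move=> k _; case: (Hf m) => _ _ e _; exact: (proj1 (qE _ _) e).
  by have [m [? _ ? ? _]] := Hl k M; exists m.
have qac : q a = q c.
  by rewrite (proj2 (qE _ _) Sab) (proj2 (qE _ _) Sbb) (proj2 (qE _ _) Sbc).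
have [m [_ h1 _ _ h4]] := Hl n 0%N.
case: (Hf m) => _ _ _; apply => k kn.
apply: Sh_agree (agree_sym (agree_le kn h1)) (agree_sym (agree_le kn h4)) _.
exact: (proj1 (qE _ _) qac).
Qed.

Lemma open_E (U : set Y) :
  open U <-> forall x, U x -> exists n, forall y, E n x y -> U y.
Proof.
split.
  move=> oU x Ux; apply: contrapT => H.
  have H1 : forall n, exists ab : Om * Om,
      [/\ q ab.1 = x, Sle n ab.1 ab.2 & ~ U (q ab.2)].
    move=> n; apply: contrapT => H2; apply: H; exists n => y [a [b [qa qb Sab]]].
    apply: contrapT => nU; apply: H2; exists (a, b); split => //=; by rewrite qb.
  have [f Hf] := choice H1.
  have [a [b [a3 [a4 Hl]]]] := koenig4 (fun m => (f m).1) (fun m => (f m).2)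
    (fun m => (f m).1) (fun m => (f m).1).
  have qa : q a = x.
    apply: (@lim_class (fun m => (f m).1)) => [m|k]; first by case: (Hf m).
    by have [m [_ h _ _ _]] := Hl k 0%N; exists m.
  have qab : q a = q b.
    apply: (proj2 (qE _ _)).
    apply: (@lim_S (fun m => (f m).1) (fun m => (f m).2)) => [m|k M].
      by case: (Hf m).
    by have [m [? ? ? _ _]] := Hl k M; exists m.
  have Ub : (q @^-1` U) b by rewrite /= -qab qa.
  have := (proj1 (q_open U) oU); rewrite openE => /(_ b Ub) nb.
  have [k Hk] := nbhs_agree_inv nb.
  have [m [_ _ h _ _]] := Hl k 0%N.
  by case: (Hf m) => _ _; apply; apply: Hk; apply: agree_sym.
move=> H; apply/q_open; rewrite openE => a Ua.
have [n Hn] := H _ Ua.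
apply: filterS (nbhs_agree a n) => b hab; apply: Hn.
exists a, b; split => // k kn.
exact: Sh_agree (agree_refl _ _) (agree_le kn hab) (Sh_refl k a).
Qed.

Lemma nbhsY (y : Y) (C : set Y) :
  nbhs y C <-> exists n, forall z, E n y z -> C z.
Proof.
split.
  rewrite nbhsE => -[B [oB By] BC].
  have [n Hn] := proj1 (open_E B) oB y By.
  by exists n => z /Hn; apply: BC.
move=> [n Hn]; rewrite nbhsE.
exists [set z | exists m, forall w, E m z w -> C w]; last first.
  by move=> z [m Hm]; apply: Hm; exact: E_refl.
split; last by exists n.
apply/open_E => z [m Hm].
have [m' Hm'] := E_split m.
exists m' => w Ezw; exists m' => v Ewv; apply: Hm; exact: Hm' Ezw Ewv.
Qed.

Lemma compactY : compact [set: Y].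
Proof.
move=> F PF _.
have [y0 _] : exists y : Y, [set: Y] y := filter_ex (@filterT _ F _).
have [om0 _] := q_surj y0.
pose P (a : K0) (g : nat -> K) (n : nat) := forall C, F C ->
  exists b : Om, [/\ b.1 = a, agreeF n g b.2 & C (q b)].
have [a [l Hl]] : exists a l, forall n, P a l n.
  apply: koenig_abs.
  - apply: contrapT => H.
    have H1 : forall a : K0, exists C, F C /\ forall b : Om, b.1 = a -> ~ C (q b).
      move=> a; apply: contrapT => H2; apply: H; exists a, (om0.2 : nat -> K) => C FC.
      apply: contrapT => H3; apply: H2; exists C; split => // b ba Cb.
      by apply: H3; exists b; split.
    have [Ca HCa] := choice H1.
    have FC : F [set t | forall a, Ca a t].
      by apply: filter_fin_all => a; case: (HCa a).
    have [y Cy] := filter_ex FC.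
    have [b qb] := q_surj y.
    by case: (HCa b.1) => _ /(_ b erefl); apply; rewrite qb.
  - move=> a g n Pg; apply: contrapT => H.
    have H1 : forall c : K, exists C, F C /\ forall b : Om, b.1 = a ->
        agreeF n.+1 (fun i => if (i < n)%N then g i else c) b.2 -> ~ C (q b).
      move=> c; apply: contrapT => H2; apply: H; exists c => C FC.
      apply: contrapT => H3; apply: H2; exists C; split => // b ba ag Cb.
      by apply: H3; exists b; split.
    have [Ca HCa] := choice H1.
    have FC : F [set t | forall c, Ca c t].
      by apply: filter_fin_all => c; case: (HCa c).
    have [b [b1 bg Cb]] := Pg _ FC.
    case: (HCa (b.2 n)) => _ /(_ b b1); apply; last exact: Cb.
    move=> i; rewrite ltnS leq_eqVlt => /orP[/eqP->|ilt]; first by rewrite ltnn.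
    by rewrite ilt bg.
  - move=> a g g' n gg' Pg C FC; have [b [h1 h2 h3]] := Pg C FC.
    by exists b; split => // i ilt; rewrite -gg' // h2.
exists (q ((a, l) : Om)); split => // A B FA nB.
have [n Hn] := proj1 (nbhsY _ _) nB.
have [b [b1 bg Ab]] := Hl n A FA.
exists (q b); split => //; apply: Hn.
exists ((a, l) : Om), b; split => // k kn.
apply: Sh_agree (agree_refl _ _) _ (Sh_refl k _).
by split => //= i ik; apply: bg; exact: leq_trans ik kn.
Qed.
End Main.

From mathcomp Require Import Rstruct lra.
Import Order.TTheory GRing.Theory Num.Theory.
Local Open Scope ring_scope.

Section Metric.
Context (RS : repl_system) (Y : topologicalType) (q : symbol_space RS -> Y)
  (hq : is_quotient_space q).

Local Notation EE := (E q).

Definition ent : set_system (Y * Y) :=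
  filter_from [set: nat] (fun n => [set xy | EE n xy.1 xy.2]).

Lemma ent_filter : Filter ent.
Proof.
apply: filter_from_filter; first by exists 0%N.
move=> i j _ _; exists (maxn i j) => // -[x y] /= h; split.
  exact: E_mono (leq_maxl i j) h.
exact: E_mono (leq_maxr i j) h.
Qed.

Lemma ent_refl A : ent A -> diagonal `<=` A.
Proof. by move=> [n _ sA] [x y]; rewrite /diagonal /= => ->; apply: sA; exact: E_refl. Qed.

Lemma ent_inv A : ent A -> ent A^-1%relation.
Proof. by move=> [n _ sA]; exists n => // -[x y] /= h; apply: sA; exact: E_sym. Qed.

Lemma ent_split A : ent A -> exists2 B, ent B & (B \; B)%relation `<=` A.
Proof.
move=> [n _ sA]; have [m Hm] := E_split hq n.
exists [set xy | EE m xy.1 xy.2]; first by exists m.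
by move=> [x z] [y /= h1 h2]; apply: sA; exact: Hm h1 h2.
Qed.

Definition YU : Type := Y.
HB.instance Definition _ := Choice.on YU.
HB.instance Definition _ :=
  @isUniform.Build YU ent ent_filter ent_refl ent_inv ent_split.

Lemma YU_cnt : countable_uniformity YU.
Proof.
exists [set [set xy : YU * YU | EE n xy.1 xy.2] | n in [set: nat]].
split; [exact: card_image_le | by move=> W [n] _ <-; exists n|].
by move=> D [n _ ?]; exists [set xy : YU * YU | EE n xy.1 xy.2] => //; exists n.
Qed.


Definition PM := @countable_uniform.type YU YU_cnt.

Lemma PM_ent (A : set (PM * PM)) : entourage A <-> ent A.
Proof. by []. Qed.


Local Notation RR := Rdefinitions.R.
Definition bl (x y : Y) (e : RR) := @ball RR PM x e y.

Lemma ball_ent (e : RR) : 0 < e -> exists n, forall x y, EE n x y -> bl x y e.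
Proof.
move=> e0.
have : @entourage PM [set xy | @ball RR PM xy.1 e xy.2].
  by rewrite -(@entourage_from_ballE RR PM); exists e.
by move=> /PM_ent [n _ sA]; exists n => x y h; exact: (sA (x, y) h).
Qed.

Lemma ent_ball n : exists2 e : RR, 0 < e & forall x y, bl x y e -> EE n x y.
Proof.
have : @entourage PM [set xy | EE n xy.1 xy.2] by apply/PM_ent; exists n.
rewrite -(@entourage_from_ballE RR PM) => -[e /= e0 sA].
by exists e => // x y h; exact: (sA (x, y) h).
Qed.

Definition dist (x y : Y) : RR := inf [set e : RR | 0 < e /\ bl x y e].

Lemma dist_has_inf x y : has_inf [set e : RR | 0 < e /\ bl x y e].
Proof.
split; first by exists 2; split => //; exact: countable_uniform.countable_uniform_bounded.
by exists 0 => e [e0 _]; exact: ltW.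
Qed.

Lemma dist_ge0 x y : 0 <= dist x y.
Proof.
apply: lb_le_inf; first exact: (dist_has_inf x y).1.
by move=> e [e0 _]; exact: ltW.
Qed.

Lemma dist_le x y e : 0 < e -> bl x y e -> dist x y <= e.
Proof. by move=> e0 h; apply: ge_inf; [exact: (dist_has_inf x y).2 | split]. Qed.

Lemma dist_lt x y e : dist x y < e -> bl x y e.
Proof.
move=> de.
have [e' [e'0 h] e'lt] := @inf_adherent _ _ (e - dist x y)
  ltac:(by rewrite subr_gt0) (dist_has_inf x y).
apply: le_ball h; move: e'lt; rewrite addrC subrK; exact: ltW.
Qed.

Lemma le_eps (a b : RR) : (forall eps : RR, 0 < eps -> a <= b + eps) -> a <= b.
Proof.
move=> H; rewrite leNgt; apply/negP => ba.
have := H ((a - b) / 2) ltac:(by rewrite divr_gt0 // subr_gt0).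
lra.
Qed.

Lemma metrizableY : metrizable Y.
Proof.
exists dist; split.
- move=> x y; split => [d0|<-].
    apply: (E_sep hq) => n; have [e e0 He] := ent_ball n.
    by apply: He; apply: dist_lt; rewrite d0.
  apply/eqP; rewrite eq_le dist_ge0 andbT; apply: le_eps => eps eps0.
  by rewrite add0r; apply: dist_le => //; exact: ballxx.
- move=> x y; rewrite /dist; congr inf; apply/funext => e; apply/propext.
  by split => -[e0 h]; split => //; apply: ball_sym.
- move=> x y z; apply: le_eps => eps eps0.
  have h1 : bl x y (dist x y + eps / 2).
    by apply: dist_lt; rewrite ltrDl divr_gt0.
  have h2 : bl y z (dist y z + eps / 2).
    by apply: dist_lt; rewrite ltrDl divr_gt0.
  have h3 := ball_triangle h1 h2.
  have := dist_le _ h3.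
  have p1 := dist_ge0 x y; have p2 := dist_ge0 y z.
  move=> /(_ ltac:(lra)); lra.
- move=> U; split.
    move=> /(open_E hq) H x Ux; have [n Hn] := H x Ux.
    have [e e0 He] := ent_ball n.
    by exists e => // y /= /dist_lt /He; apply: Hn.
  move=> H; apply/(open_E hq) => x Ux; have [e e0 He] := H x Ux.
  have [n Hn] := @ball_ent (e / 2) ltac:(by rewrite divr_gt0).
  exists n => y /Hn /dist_le h; apply: He => /=.
  have := h ltac:(by rewrite divr_gt0); lra.
Qed.

End Metric.

Theorem theorem1p24 (RS : repl_system) (Y : topologicalType)
    (q : symbol_space RS -> Y) :
  expanding RS -> is_quotient_space q ->
  compact [set: Y]%classic /\ metrizable Y.
Proof.
move=> _ hq; split; [exact: compactY hq | exact: metrizableY hq].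
Qed.
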